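(* Let $\mathcal F$ be a completely positive trace-preserving map on $M_D$ with $\tau(\mathcal F)<1$, and let $\mathcal Z$ be its fundamental channel. Then $$\|\mathcal Z\|_{1\to1}\le\frac{1+\tau(\mathcal F)}{1-\tau(\mathcal F)}.$$
   Context: Notation: $M_D$ is the space of complex $D\times D$ matrices, and $\|\mathcal F\|_{1\to1}:=\sup_{\sigma\ne0}\|\mathcal F(\sigma)\|_1/\|\sigma\|_1$ with $\|\cdot\|_1$ the trace norm. The ergodicity coefficient is $\tau(\mathcal F):=\sup\{\|\mathcal F(\sigma)\|_1/\|\sigma\|_1:\ 0\ne\sigma,\ \mathrm{Tr}\,\sigma=0\}$. Fundamental channel: for a completely positive trace-preserving map $\mathcal F$ with $\tau(\mathcal F)<1$ and unique fixed density matrix $\rho$, let $\mathcal F^\infty(X):=\mathrm{Tr}(X)\,\rho$, which equals $\lim_{k\to\infty}\mathcal F^k$. The fundamental channel is $\mathcal Z:=(\mathrm{id}-\mathcal F+\mathcal F^\infty)^{-1}$. *)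

(* Defs.v *)
(* Complex numbers are modelled by an arbitrary
   numClosedFieldType C (algebraically closed field with conjugation and
   the canonical partial order; e.g. algC). *)
From HB Require Import structures.
From mathcomp Require Import all_boot all_order all_algebra.
Set Implicit Arguments. Unset Strict Implicit. Unset Printing Implicit Defensive.
Import Order.TTheory GRing.Theory Num.Theory Num.Def.
Local Open Scope ring_scope.

Definition adjmx {C : numClosedFieldType} m n (X : 'M[C]_(m, n)) : 'M[C]_(n, m) :=
  (map_mx conjC X)^T.

(* trace norm  ||X||_1 = Tr sqrt(X^* X) = sum of the square roots of the
   eigenvalues of X^* X (spectral_diag gives the eigenvalues of the normal
   matrix X^* X, with multiplicity). *)
Definition trnorm {C : numClosedFieldType} n (X : 'M[C]_n) : C :=
  \sum_(i < n) sqrtC (spectral_diag (adjmx X *m X) 0 i).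

Definition psdmx {C : numClosedFieldType} n (A : 'M[C]_n) : Prop :=
  forall v : 'cV[C]_n, 0 <= (adjmx v *m A *m v) 0 0.

Definition densitymx {C : numClosedFieldType} n (A : 'M[C]_n) : Prop :=
  psdmx A /\ \tr A = 1.

(* complete positivity: id_k (x) F maps positive elements of
   M_k (x) M_D (= k x k block matrices with D x D blocks) to positive ones,
   for every k. *)
Definition completely_positive {C : numClosedFieldType} D
  (F : 'M[C]_D -> 'M[C]_D) : Prop :=
  forall (k : nat) (B : 'I_k -> 'I_k -> 'M[C]_D),
    psdmx (\mxblock_(i < k, j < k) B i j) ->
    psdmx (\mxblock_(i < k, j < k) F (B i j)).

Definition trace_preserving {C : numClosedFieldType} D
  (F : 'M[C]_D -> 'M[C]_D) : Prop :=
  forall X, \tr (F X) = \tr X.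

Definition is_lub {C : numClosedFieldType} (S : C -> Prop) (t : C) : Prop :=
  (forall s, S s -> s <= t) /\ (forall u, (forall s, S s -> s <= u) -> t <= u).

Definition ergodicity_set {C : numClosedFieldType} D
  (F : 'M[C]_D -> 'M[C]_D) (r : C) : Prop :=
  exists sigma : 'M[C]_D,
    [/\ sigma != 0, \tr sigma = 0 & r = trnorm (F sigma) / trnorm sigma].

Definition ergodicity_coeff {C : numClosedFieldType} D
  (F : 'M[C]_D -> 'M[C]_D) (t : C) : Prop :=
  is_lub (ergodicity_set F) t.

Definition Finf {C : numClosedFieldType} D (rho : 'M[C]_D) (X : 'M[C]_D) : 'M[C]_D :=
  \tr X *: rho.

Definition fundamental_channel {C : numClosedFieldType} D
  (F : 'M[C]_D -> 'M[C]_D) (rho : 'M[C]_D) (Z : 'M[C]_D -> 'M[C]_D) : Prop :=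
  (forall X, Z (X - F X + Finf rho X) = X) /\
  (forall X, Z X - F (Z X) + Finf rho (Z X) = X).

(* Main.v *)
Require Import Defs.
From HB Require Import structures.
From mathcomp Require Import all_boot all_order all_algebra.
From mathcomp Require Import ring.
Import Order.TTheory GRing.Theory Num.Theory.
Set Implicit Arguments. Unset Strict Implicit. Unset Printing Implicit Defensive.
Local Open Scope ring_scope.

Section Adj.
Variable C : numClosedFieldType.

Lemma adjmxE m n (A : 'M[C]_(m, n)) i j : adjmx A i j = (A j i)^*.
Proof. by rewrite /adjmx !mxE. Qed.

Lemma adjmxK m n (A : 'M[C]_(m, n)) : adjmx (adjmx A) = A.
Proof. by apply/matrixP => i j; rewrite !adjmxE conjCK. Qed.

Lemma adjmxD m n (A B : 'M[C]_(m, n)) : adjmx (A + B) = adjmx A + adjmx B.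
Proof. by apply/matrixP => i j; rewrite /adjmx !mxE rmorphD. Qed.

Lemma adjmxN m n (A : 'M[C]_(m, n)) : adjmx (- A) = - adjmx A.
Proof. by apply/matrixP => i j; rewrite /adjmx !mxE rmorphN. Qed.

Lemma adjmxB m n (A B : 'M[C]_(m, n)) : adjmx (A - B) = adjmx A - adjmx B.
Proof. by rewrite adjmxD adjmxN. Qed.

Lemma adjmxZ m n (c : C) (A : 'M[C]_(m, n)) : adjmx (c *: A) = c^* *: adjmx A.
Proof. by apply/matrixP => i j; rewrite /adjmx !mxE rmorphM. Qed.

Lemma adjmxM m n p (A : 'M[C]_(m, n)) (B : 'M[C]_(n, p)) :
  adjmx (A *m B) = adjmx B *m adjmx A.
Proof. by rewrite /adjmx map_mxM trmx_mul. Qed.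

Lemma adjmx1 n : adjmx (1%:M : 'M[C]_n) = 1%:M.
Proof. by apply/matrixP => i j; rewrite adjmxE !mxE eq_sym rmorph_nat. Qed.

Lemma adjmx_tstar m n (A : 'M[C]_(m, n)) : map_mx Num.conj (A ^T) = adjmx A.
Proof. by rewrite /adjmx map_trmx. Qed.

Lemma mul_adjE m n p (A : 'M[C]_(m, n)) (B : 'M[C]_(p, n)) i j :
  (A *m adjmx B) i j = \sum_k A i k * (B j k)^*.
Proof. by rewrite mxE; apply: eq_bigr => k _; rewrite adjmxE. Qed.

Lemma nrm2_ge0 m n (A : 'M[C]_(m, n)) i : 0 <= (A *m adjmx A) i i.
Proof. by rewrite mul_adjE; apply: sumr_ge0 => k _; apply: mul_conjC_ge0. Qed.

Lemma nrm2_eq0 m n (A : 'M[C]_(m, n)) i : (A *m adjmx A) i i = 0 -> forall k, A i k = 0.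
Proof.
rewrite mul_adjE => /psumr_eq0P h k; apply/eqP; rewrite -mul_conjC_eq0.
by apply/eqP/h => // l _; apply: mul_conjC_ge0.
Qed.

Lemma adj_entry11 m (a : 'rV[C]_m) (b : 'rV[C]_m) :
  (b *m adjmx a) 0 0 = ((a *m adjmx b) 0 0)^*.
Proof. by rewrite -adjmxE adjmxM adjmxK. Qed.

End Adj.

Section Spec.
Variable C : numClosedFieldType.
Variable n : nat.
Implicit Types X : 'M[C]_n.

Definition Hm X := adjmx X *m X.
Definition Pm X := spectralmx (Hm X).
Definition dv X := spectral_diag (Hm X).
Definition Mm X := X *m adjmx (Pm X).
Definition sv X i := sqrtC (dv X 0 i).

Lemma Hm_normal X : Hm X \is normalmx.
Proof.
apply/normalmxP; rewrite adjmx_tstar /Hm adjmxM adjmxK //.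
Qed.

Lemma Pm_unit1 X : Pm X *m adjmx (Pm X) = 1%:M.
Proof. by rewrite -adjmx_tstar; apply/unitarymxP/spectral_unitarymx. Qed.

Lemma Pm_inv X : invmx (Pm X) = adjmx (Pm X).
Proof. by rewrite -adjmx_tstar invmx_unitary // spectral_unitarymx. Qed.

Lemma Pm_unit2 X : adjmx (Pm X) *m Pm X = 1%:M.
Proof. by rewrite -Pm_inv mulVmx // spectral_unit. Qed.

Lemma Hm_spec X : Hm X = adjmx (Pm X) *m diag_mx (dv X) *m Pm X.
Proof. by rewrite -Pm_inv; apply/orthomx_spectralP/Hm_normal. Qed.

Lemma XMP X : X = Mm X *m Pm X.
Proof. by rewrite /Mm -mulmxA Pm_unit2 mulmx1. Qed.

Lemma MM X : adjmx (Mm X) *m Mm X = diag_mx (dv X).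
Proof.
rewrite /Mm adjmxM adjmxK -mulmxA (mulmxA (adjmx X)) -/(Hm X).
rewrite Hm_spec !mulmxA Pm_unit1 mul1mx -mulmxA Pm_unit1 mulmx1 //.
Qed.

Lemma dvE X i : dv X 0 i = (adjmx (Mm X) *m Mm X) i i.
Proof. by rewrite MM mxE eqxx mulr1n. Qed.

Lemma dv_ge0 X i : 0 <= dv X 0 i.
Proof. by rewrite dvE -{2}[Mm X]adjmxK nrm2_ge0. Qed.

Lemma sv_ge0 X i : 0 <= sv X i.
Proof. by rewrite sqrtC_ge0 dv_ge0. Qed.

Lemma sv2 X i : sv X i ^+ 2 = dv X 0 i.
Proof. by rewrite sqrtCK. Qed.

Lemma trnormE X : trnorm X = \sum_i sv X i.
Proof. by []. Qed.

End Spec.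

Section KS.
Variable C : numClosedFieldType.

Lemma KS m (a b : 'rV[C]_m) (s : C) : 0 <= s ->
  (a *m adjmx a) 0 0 <= 1 -> (b *m adjmx b) 0 0 = s ^+ 2 ->
  (a *m adjmx b) 0 0 + ((a *m adjmx b) 0 0)^* <= 2%:R * s.
Proof.
move=> s0 ha hb.
have h := nrm2_ge0 (s *: a - b) 0.
rewrite adjmxB adjmxZ (geC0_conj s0) mulmxBl !mulmxBr -!scalemxAl -!scalemxAr in h.
have hba := adj_entry11 a b.
set aa := a *m adjmx a in ha h; set ab := a *m adjmx b in h hba *.
set ba := b *m adjmx a in h hba; set bb := b *m adjmx b in h hb.
rewrite ![((_ : 'M_1) + _) 0 0]mxE ![(- (_ : 'M_1)) 0 0]mxE ![(_ *: (_ : 'M_1)) 0 0]mxE in h.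
rewrite ![((_ : 'M_1) + _) 0 0]mxE ![(- (_ : 'M_1)) 0 0]mxE ![(_ *: (_ : 'M_1)) 0 0]mxE hba hb in h.
have [s00|sp] := eqVneq s 0.
  have b0 : forall k, b 0 k = 0 by apply: nrm2_eq0; rewrite -/bb hb s00 expr0n.
  rewrite s00.
  have -> : ab 0 0 = 0 by rewrite /ab mul_adjE big1 // => k _; rewrite b0 conjC0 mulr0.
  by rewrite conjC0 addr0 mulr0.
have spos : 0 < s by rewrite lt_def sp s0.
rewrite -(ler_pM2l spos).
have e : s * (s * aa 0 0) - s * ab 0 0 - (s * (ab 0 0)^* - s ^+ 2) =
   s * s * aa 0 0 + s ^+ 2 - s * (ab 0 0 + (ab 0 0)^*) by ring.
rewrite e subr_ge0 in h; apply: le_trans h _.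
have : s * s * aa 0 0 <= s * s * 1 by apply: ler_wpM2l => //; apply: mulr_ge0.
rewrite mulr1 -expr2 => h2.
have -> : s * (2%:R * s) = s ^+ 2 + s ^+ 2 by rewrite mulr_natl mulrnAr -expr2 mulr2n.
by rewrite lerD2r.
Qed.
End KS.

Section TrBound.
Variable C : numClosedFieldType.
Variable n : nat.
Implicit Types X U : 'M[C]_n.

Definition contr_mx U := forall r : 'rV[C]_n,
  ((r *m U) *m adjmx (r *m U)) 0 0 <= (r *m adjmx r) 0 0.

Lemma rowrow m p q (A : 'M[C]_(m, p)) (B : 'M[C]_(q, p)) i j :
  (row i A *m adjmx (row j B)) 0 0 = (A *m adjmx B) i j.
Proof. by rewrite !mul_adjE; apply: eq_bigr => k _; rewrite !mxE. Qed.

Lemma mulmx_rowrow m p q (A : 'M[C]_(m, p)) (B : 'M[C]_(p, q)) i j :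
  (A *m B) i j = (row i A *m adjmx (row j (adjmx B))) 0 0.
Proof. by rewrite rowrow adjmxK. Qed.

Lemma trUX_le U X : contr_mx U ->
  \tr (U *m X) + (\tr (U *m X))^* <= 2%:R * trnorm X.
Proof.
move=> hU; rewrite {1 2}[X]XMP mulmxA mxtrace_mulC mulmxA.
rewrite /mxtrace rmorph_sum -big_split trnormE mulr_sumr /=.
apply: ler_sum => i _; rewrite mulmx_rowrow.
apply: KS; first exact: sv_ge0.
  rewrite row_mul; apply: le_trans (hU _) _.
  by rewrite rowrow Pm_unit1 mxE eqxx.
by rewrite rowrow adjmxK -dvE sv2.
Qed.

End TrBound.

Section Attain.
Variable C : numClosedFieldType.
Variable n : nat.
Implicit Types X U : 'M[C]_n.

Lemma adjmx_diag (v : 'rV[C]_n) : (forall i, (v 0 i)^* = v 0 i) ->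
  adjmx (diag_mx v) = diag_mx v.
Proof.
move=> hv; apply/matrixP => i j; rewrite adjmxE !mxE.
case: (eqVneq i j) => [->|ne]; first by rewrite !mulr1n hv.
by rewrite !mulr0n conjC0.
Qed.

Definition sinv X := \row_i (sv X i)^-1.
Definition Nm X := Mm X *m diag_mx (sinv X).
Definition Um X := adjmx (Pm X) *m adjmx (Nm X).

Lemma sinv_real X i : ((sinv X) 0 i)^* = (sinv X) 0 i.
Proof. by rewrite mxE geC0_conj // invr_ge0 sv_ge0. Qed.

Lemma sv_inv_sq X i : (sv X i)^-1 * dv X 0 i = sv X i.
Proof.
rewrite -sv2; have [->|ne] := eqVneq (sv X i) 0; first by rewrite invr0 mul0r.
by rewrite expr2 mulrA mulVf // mul1r.
Qed.

Lemma NN X : adjmx (Nm X) *m Nm X =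
  diag_mx (\row_j ((sv X j)^-1 * dv X 0 j * (sv X j)^-1)).
Proof.
rewrite /Nm adjmxM adjmx_diag; last exact: sinv_real.
rewrite -mulmxA (mulmxA (adjmx (Mm X))) MM mulmx_diag mulmx_diag.
by congr diag_mx; apply/matrixP => i j; rewrite !mxE mulrA.
Qed.

Lemma Um_contr X : contr_mx (Um X).
Proof.
move=> r; rewrite /Um mulmxA; set q := r *m adjmx (Pm X).
rewrite adjmxM adjmxK mulmxA -(mulmxA q) NN.
have -> : (r *m adjmx r) 0 0 = (q *m adjmx q) 0 0.
  by rewrite /q adjmxM adjmxK mulmxA -(mulmxA r) Pm_unit2 mulmx1.
rewrite mul_mx_diag !mul_adjE; apply: ler_sum => k _; rewrite !mxE.
rewrite mulrAC [X in X <= _]mulrC -[X in _ <= X]mul1r; apply: ler_wpM2r; first exact: mul_conjC_ge0.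
rewrite sv_inv_sq; have [->|ne] := eqVneq (sv X k) 0; first by rewrite mul0r ler01.
by rewrite mulfV.
Qed.

Lemma Um_tr X : \tr (Um X *m X) = trnorm X.
Proof.
have -> : Um X *m X = adjmx (Pm X) *m (adjmx (Nm X) *m Mm X *m Pm X).
  by rewrite -mulmxA -XMP /Um mulmxA.
rewrite mxtrace_mulC -(mulmxA _ (Pm X)) Pm_unit1 mulmx1.
rewrite trnormE /mxtrace; apply: eq_bigr => i _.
rewrite mxE (eq_bigr (fun k => (sv X i)^-1 * ((Mm X k i)^* * Mm X k i))); last first.
  move=> k _; rewrite adjmxE /Nm mul_mx_diag mxE rmorphM /= [sinv X 0 i]mxE (@geC0_conj _ (sv X i)^-1).
    by rewrite mulrAC mulrC.
  by rewrite invr_ge0 sv_ge0.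
rewrite -mulr_sumr -[RHS]sv_inv_sq dvE mxE; congr (_ * _); apply: eq_bigr => k _.
by rewrite adjmxE.
Qed.

End Attain.

Section Final.
Variable C : numClosedFieldType.
Variable n : nat.
Implicit Types X A B U : 'M[C]_n.

Lemma trnorm_ge0 X : 0 <= trnorm X.
Proof. by rewrite trnormE; apply: sumr_ge0 => i _; apply: sv_ge0. Qed.

Lemma trnorm_conj X : (trnorm X)^* = trnorm X.
Proof. by rewrite geC0_conj // trnorm_ge0. Qed.

Lemma trnorm_gt0 X : X != 0 -> 0 < trnorm X.
Proof.
move=> X0; rewrite lt_def trnorm_ge0 andbT; apply: contra X0 => /eqP h.
have sv0 i : sv X i = 0.
  by move: h; rewrite trnormE => /psumr_eq0P -> // j _; apply: sv_ge0.
have M0 : Mm X = 0.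
  apply/matrixP => k i; rewrite [RHS]mxE -[Mm X k i]conjCK -adjmxE.
  have := nrm2_eq0 (A := adjmx (Mm X)) (i := i); rewrite adjmxK -dvE -sv2 sv0.
  by rewrite expr0n /= => /(_ erefl k) ->; rewrite conjC0.
by rewrite [X]XMP M0 mul0mx.
Qed.

Lemma trnorm0 : trnorm (0 : 'M[C]_n) = 0.
Proof. by rewrite -(Um_tr 0) mulmx0 linear0. Qed.

Lemma two_gt0 : 0 < 2%:R :> C. Proof. by rewrite ltr0n. Qed.

Lemma trnormD A B : trnorm (A + B) <= trnorm A + trnorm B.
Proof.
rewrite -(ler_pM2l two_gt0) mulrDr.
set U := Um (A + B).
have e : 2%:R * trnorm (A + B) = \tr (U *m (A + B)) + (\tr (U *m (A + B)))^*.
  by rewrite /U Um_tr trnorm_conj mulr_natl mulr2n.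
rewrite e mulmxDr linearD rmorphD /= addrACA.
by apply: lerD; apply: trUX_le; apply: Um_contr.
Qed.


Lemma contr_scale (w : C) U : `|w| <= 1 -> contr_mx U -> contr_mx (w *: U).
Proof.
move=> hw hU r; rewrite -scalemxAr adjmxZ -scalemxAl -scalemxAr.
rewrite ![((_ *: (_ : 'M_1)) 0 0)]mxE mulrA -normCK.
apply: le_trans (hU r); rewrite -[X in _ <= X]mul1r.
apply: ler_wpM2r; first exact: nrm2_ge0.
by rewrite expr_le1 // normr_ge0.
Qed.

Lemma contr1 : contr_mx (1%:M : 'M[C]_n).
Proof. by move=> r; rewrite mulmx1. Qed.

Lemma trnormZ (c : C) A : trnorm (c *: A) <= `|c| * trnorm A.
Proof.
have [->|c0] := eqVneq c 0; first by rewrite scale0r trnorm0 normr0 mul0r.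
have nc : 0 < `|c| by rewrite normr_gt0.
set U := Um (c *: A); set t := \tr (U *m A).
have ht : c * t = trnorm (c *: A) by rewrite -(Um_tr (c *: A)) -/U -scalemxAr linearZ.
have hw : \tr ((c / `|c|) *: U *m A) = trnorm (c *: A) / `|c|.
  by rewrite -scalemxAl linearZ /= -ht mulrAC.
have h1 : `|c / `|c| | <= 1.
  by rewrite normrM normfV normr_id mulfV // normr_eq0.
have := trUX_le A (contr_scale h1 (Um_contr (c *: A))).
rewrite -/U hw geC0_conj; last by rewrite divr_ge0 ?trnorm_ge0 ?normr_ge0.
move=> h; have h2 : 2%:R * (trnorm (c *: A) / `|c|) <= 2%:R * trnorm A by rewrite mulr_natl mulr2n.
by rewrite ler_pM2l ?two_gt0 // ler_pdivrMr // mulrC in h2.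
Qed.

Lemma tr_le_trnorm A : `|\tr A| <= trnorm A.
Proof.
have [->|t0] := eqVneq (\tr A) 0; first by rewrite normr0 trnorm_ge0.
have nt : 0 < `|\tr A| by rewrite normr_gt0.
set w := (\tr A)^* / `|\tr A|.
have hw : \tr ((w *: 1%:M) *m A) = `|\tr A|.
  rewrite -scalemxAl mul1mx linearZ /= /w mulrAC mulrC -normCKC.
  by rewrite expr2 mulKf // normr_eq0.
have h1 : `|w| <= 1.
  by rewrite normrM normfV normr_id norm_conjC mulfV // normr_eq0.
have := trUX_le A (contr_scale h1 contr1).
rewrite hw geC0_conj ?normr_ge0 // => h.
have h2 : 2%:R * `|\tr A| <= 2%:R * trnorm A by rewrite mulr_natl mulr2n.
by rewrite ler_pM2l ?two_gt0 in h2.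
Qed.

End Final.

Section PSD.
Variable C : numClosedFieldType.
Variable n : nat.
Implicit Types A H S U : 'M[C]_n.

Definition Qf H (v : 'cV[C]_n) := (adjmx v *m H *m v) 0 0.

Lemma adjmx_delta (i : 'I_n) : adjmx (delta_mx i 0 : 'cV[C]_n) = delta_mx 0 i.
Proof.
apply/matrixP => a b; rewrite adjmxE !mxE rmorph_nat andbC.
by rewrite [b == i]eq_sym.
Qed.

Lemma Bdelta H i j : (adjmx (delta_mx i 0 : 'cV[C]_n) *m H *m (delta_mx j 0 : 'cV[C]_n)) 0 0 = H i j.
Proof. by rewrite adjmx_delta -(rowE i H) -(colE j (row i H)) !mxE. Qed.

Lemma Qexp H i j (x : C) :
  Qf H (delta_mx i 0 + x *: delta_mx j 0) =
  Qf H (delta_mx i 0) + x * H i j + x^* * H j i + x^* * x * Qf H (delta_mx j 0).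
Proof.
rewrite /Qf adjmxD adjmxZ !mulmxDl !mulmxDr -!scalemxAl -!scalemxAr.
rewrite ![(((_ : 'M_1) + _) 0 0)]mxE ![((_ *: (_ : 'M_1)) 0 0)]mxE.
rewrite ?[(((_ : 'M_1) + _) 0 0)]mxE ?[((_ *: (_ : 'M_1)) 0 0)]mxE.
rewrite ?[(((_ : 'M_1) + _) 0 0)]mxE ?[((_ *: (_ : 'M_1)) 0 0)]mxE !Bdelta.
by rewrite !addrA mulrA.
Qed.

Lemma polar H : (forall v, Qf H v = 0) -> H = 0.
Proof.
move=> hQ; apply/matrixP => i j; rewrite [RHS]mxE.
have h1 := Qexp H i j 1; rewrite !hQ rmorph1 !mul1r !add0r addr0 in h1.
have h2 := Qexp H i j 'i; rewrite !hQ mulr0 add0r addr0 conjCi in h2.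
have e : 'i * (H i j - H j i) = 0 by rewrite mulrBr -mulNr -h2.
move/eqP: e; rewrite mulf_eq0 (negPf (neq0Ci C)) /= subr_eq0 => /eqP e.
by apply/eqP; move: h1; rewrite -e -mulr2n => /esym/eqP; rewrite mulrn_eq0.
Qed.

Lemma QfA_conj A (v : 'cV[C]_n) : (adjmx v *m adjmx A *m v) 0 0 = ((adjmx v *m A *m v) 0 0)^*.
Proof. by rewrite -adjmxE !adjmxM adjmxK mulmxA. Qed.

Lemma psd_herm A : psdmx A -> adjmx A = A.
Proof.
move=> hA; apply/eqP; rewrite -subr_eq0; apply/eqP/polar => v.
rewrite /Qf mulmxBr mulmxBl [((_ : 'M_1) - _) 0 0]mxE [(- (_ : 'M_1)) 0 0]mxE.
by rewrite QfA_conj geC0_conj ?subrr //; apply: hA.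
Qed.

Lemma sp_unit1 S : spectralmx S *m adjmx (spectralmx S) = 1%:M.
Proof. by rewrite -adjmx_tstar; apply/unitarymxP/spectral_unitarymx. Qed.

Lemma sp_inv S : invmx (spectralmx S) = adjmx (spectralmx S).
Proof. by rewrite -adjmx_tstar invmx_unitary // spectral_unitarymx. Qed.

Lemma sp_unit2 S : adjmx (spectralmx S) *m spectralmx S = 1%:M.
Proof. by rewrite -sp_inv mulVmx // spectral_unit. Qed.

Lemma trnorm_psd A : psdmx A -> trnorm A <= \tr A.
Proof.
move=> hA; have hH := psd_herm hA.
have nA : A \is normalmx by apply/normalmxP; rewrite adjmx_tstar hH.
set R := spectralmx A; set L := spectral_diag A.
have eA : A = adjmx R *m diag_mx L *m R by rewrite -sp_inv; apply/orthomx_spectralP.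
have RAR : R *m A *m adjmx R = diag_mx L.
  by rewrite eA !mulmxA sp_unit1 mul1mx -mulmxA sp_unit1 mulmx1.
have L0 i : 0 <= L 0 i.
  have := hA (adjmx (row i R)); rewrite adjmxK -row_mul rowrow RAR mxE eqxx mulr1n.
  by [].
have trA : \tr A = \sum_i L 0 i.
  by rewrite -mxtrace_diag -RAR mxtrace_mulC mulmxA sp_unit2 mul1mx.
set U := Um A.
have e : 2%:R * trnorm A = \tr (U *m A) + (\tr (U *m A))^*.
  by rewrite /U Um_tr trnorm_conj mulr_natl mulr2n.
have tUA : \tr (U *m A) = \sum_i (R *m U *m adjmx R) i i * L 0 i.
  rewrite {1}eA !mulmxA mxtrace_mulC !mulmxA mul_mx_diag /mxtrace.
  by apply: eq_bigr => i _; rewrite mxE.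
rewrite -(ler_pM2l (two_gt0 C)) e tUA rmorph_sum -big_split trA mulr_sumr /=.
apply: ler_sum => i _; rewrite rmorphM /= (geC0_conj (L0 i)) -mulrDl.
rewrite mulrC [X in _ <= X]mulrC; apply: ler_wpM2l; first exact: L0.
have := @KS C n (row i (R *m U)) (row i R) 1 ler01.
rewrite !rowrow mulr1; apply.
  rewrite -rowrow row_mul; apply: le_trans (Um_contr A (row i R)) _.
  by rewrite rowrow sp_unit1 mxE eqxx.
by rewrite sp_unit1 mxE eqxx expr1n.
Qed.

End PSD.


Definition Gf (C : numClosedFieldType) D (F : {linear 'M[C]_D -> 'M[C]_D})
  (rho : 'M[C]_D) (X : 'M[C]_D) := X - F X + Finf rho X.

Fact Gf_lin (C : numClosedFieldType) D (F : {linear 'M[C]_D -> 'M[C]_D})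
  (rho : 'M[C]_D) : linear (Gf F rho).
Proof.
move=> a u v; rewrite /Gf /Finf.
rewrite [F (a *: u + v)]linearP [\tr (a *: u + v)]linearP /=.
rewrite scalerDl -scalerA scalerDr !scalerDr !scalerN.
by rewrite opprD (addrACA (a *: u) v) (addrACA (a *: u - a *: F u)).
Qed.

HB.instance Definition _ (C : numClosedFieldType) D
  (F : {linear 'M[C]_D -> 'M[C]_D}) (rho : 'M[C]_D) :=
  GRing.isLinear.Build C 'M[C]_D 'M[C]_D *:%R (Gf F rho) (Gf_lin F rho).

Theorem mainTheorem8 (C : numClosedFieldType) (D : nat)
  (F : {linear 'M[C]_D -> 'M[C]_D}) (tau : C) (rho : 'M[C]_D) :
  completely_positive F -> trace_preserving F ->
  ergodicity_coeff F tau -> tau < 1 ->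
  densitymx rho -> F rho = rho ->
  (forall sigma, densitymx sigma -> F sigma = sigma -> sigma = rho) ->
  exists Z : {linear 'M[C]_D -> 'M[C]_D},
    fundamental_channel F rho Z /\
    (forall X : 'M[C]_D, X != 0 ->
       trnorm (Z X) / trnorm X <= (1 + tau) / (1 - tau)).
Proof.
move=> _ TP [tub tlub] tau1 [rpsd rtr] Frho _.
have taureal : tau \is Num.real by apply: ler1_real; apply: ltW.
have contr Y : \tr Y = 0 -> trnorm (F Y) <= tau * trnorm Y.
  move=> trY; have [->|Y0] := eqVneq Y 0.
    by rewrite linear0 trnorm0 mulr0.
  have := tub _ (ex_intro _ Y (And3 Y0 trY erefl)).
  by rewrite ler_pdivrMr ?trnorm_gt0.
have tau0 : 0 <= tau.
  case: (real_ge0P taureal) => // tneg; exfalso.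
  have : tau <= tau - 1.
    apply: tlub => s [sg [sg0 sgt ->]]; exfalso.
    have h1 : 0 <= trnorm (F sg) / trnorm sg by rewrite divr_ge0 ?trnorm_ge0.
    have h2 := tub _ (ex_intro _ sg (And3 sg0 sgt erefl)).
    by have := lt_le_trans tneg (le_trans h1 h2); rewrite ltxx.
  by rewrite -{1}[tau]addr0 lerD2l ler0N1.
have trrho : trnorm rho <= 1 by rewrite -rtr trnorm_psd.
pose g := linfun (Gf F rho).
have gE x : g x = Gf F rho x by rewrite lfunE.
have trG x : \tr (Gf F rho x) = \tr x.
  by rewrite /Gf /Finf !linearD /= linearN linearZ /= TP rtr mulr1 addrN add0r.
have kg : lker g == 0%VS.
  apply/lker0P => x y; rewrite !gE => e.
  suff key : forall w, Gf F rho w = 0 -> w = 0.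
    by apply/eqP; rewrite -subr_eq0; apply/eqP/key; rewrite linearB /= e subrr.
  move=> w hw; have trw : \tr w = 0 by rewrite -trG hw linear0.
  move: hw; rewrite /Gf /Finf trw scale0r addr0 => /eqP; rewrite subr_eq0 => /eqP hw.
  apply/eqP; apply: contraT => w0.
  have := contr w trw; rewrite -hw -{1}[trnorm w]mul1r ler_pM2r ?trnorm_gt0 //.
  by move=> h; have := lt_le_trans tau1 h; rewrite ltxx.
exists (fun_of_lfun (g^-1)%VF : {linear 'M[C]_D -> 'M[C]_D}); split.
  split => X /=.
    by have := lker0_lfunK kg X; rewrite gE.
  by have := lker0_lfunVK kg X; rewrite gE.
move=> X X0 /=; set W := (g^-1)%VF X.
have hW : W - F W + Finf rho W = X by have := lker0_lfunVK kg X; rewrite gE.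
have trW : \tr W = \tr X by rewrite -hW -/(Gf F rho W) trG.
set Y := W - \tr X *: rho.
have trY : \tr Y = 0 by rewrite /Y linearB /= linearZ /= rtr mulr1 trW subrr.
have FY : F Y = F W - \tr X *: rho by rewrite /Y linearB /= linearZ /= Frho.
have hWY : W = X + F Y.
  by rewrite FY -{1}hW /Finf trW -addrA [\tr X *: rho + _]addrC addrNK subrK.
have hY : Y = (X - \tr X *: rho) + F Y by rewrite {1}/Y {1}hWY addrAC.
have tX0 := trnorm_gt0 X0.
have nsig : trnorm (X - \tr X *: rho) <= 2%:R * trnorm X.
  apply: le_trans (trnormD _ _) _; rewrite -scaleNr mulr2n mulrDl mul1r lerD2l.
  apply: le_trans (trnormZ _ _) _; rewrite normrN.
  apply: le_trans (tr_le_trnorm X); rewrite -{2}[`|\tr X|]mulr1.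
  by apply: ler_wpM2l.
have nY : (1 - tau) * trnorm Y <= 2%:R * trnorm X.
  apply: le_trans nsig; rewrite mulrBl mul1r lerBlDr.
  by rewrite {1}hY; apply: le_trans (trnormD _ _) _; rewrite lerD2l contr.
have t1 : 0 < 1 - tau by rewrite subr_gt0.
have nY' : trnorm Y <= 2%:R * trnorm X / (1 - tau).
  by rewrite ler_pdivlMr // mulrC.
have nW : trnorm W <= trnorm X + tau * (2%:R * trnorm X / (1 - tau)).
  rewrite {1}hWY; apply: le_trans (trnormD _ _) _; rewrite lerD2l.
  by apply: le_trans (contr _ trY) _; apply: ler_wpM2l.
rewrite ler_pdivrMr //; apply: (le_trans nW); rewrite le_eqVlt; apply/orP; left.
apply/eqP; field; by rewrite subr_eq0 eq_sym lt_eqF.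
Qed.
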